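(* Let $I\subset K[x,y]$ be a monomial ideal. Then the following are equivalent: (1) $I$ satisfies the non-pure dual exchange property; (2) $I$ satisfies the non-pure exchange property; (3) $I$ is componentwise polymatroidal.
   Context: For a monomial $u$, $\deg_{x_i}(u)$ is the exponent of the variable $x_i$ in $u$; $G(I)$ is the minimal monomial generating set. A monomial ideal generated in a single degree is polymatroidal if for all $u,v\in G(I)$ and all $i$ with $\deg_{x_i}(u)>\deg_{x_i}(v)$ there exists $j$ with $\deg_{x_j}(u)<\deg_{x_j}(v)$ and $x_j(u/x_i)\in I$. $I_{\langle j\rangle}$ denotes the ideal generated by all monomials of degree $j$ in $I$; $I$ is componentwise polymatroidal if every nonzero $I_{\langle j\rangle}$ is polymatroidal. $I$ satisfies the non-pure exchange property if for all $u,v \in G(I)$ with $\deg(u)\leq \deg(v)$ and all $i$ with $\deg_{x_i}(v) > \deg_{x_i}(u)$, there exists $j$ with $\deg_{x_j}(v)< \deg_{x_j}(u)$ and $x_j(v/x_i) \in I$. $I$ satisfies the non-pure dual exchange property if for all $u,v \in G(I)$ with $\deg(u) \leq \deg(v)$ and all $i$ with $\deg_{x_i}(v) < \deg_{x_i}(u)$, there exists $j$ with $\deg_{x_j}(v) > \deg_{x_j}(u)$ and $x_i(v/x_j) \in I$. *)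

(* Defs.v *)
From mathcomp Require Import all_boot all_algebra.
From mathcomp Require Import mpoly.

Set Implicit Arguments.
Unset Strict Implicit.
Unset Printing Implicit Defensive.

Import GRing.Theory.
Local Open Scope ring_scope.

Section MonomialIdeals.
Variables (K : fieldType) (n : nat).

Definition is_ideal (I : {mpoly K[n]} -> Prop) : Prop :=
  [/\ I 0,
      (forall p q, I p -> I q -> I (p + q)) &
      (forall p q, I q -> I (p * q))].

(* ... generated by monomials: p is in I iff all monomials of its support are. *)
Definition is_monomial_ideal (I : {mpoly K[n]} -> Prop) : Prop :=
  is_ideal I /\ (forall p m, I p -> m \in msupp p -> I 'X_[m]).

Definition mingen (I : {mpoly K[n]} -> Prop) (u : 'X_{1..n}) : Prop :=
  I 'X_[u] /\ (forall w : 'X_{1..n}, I 'X_[w] -> (w <= u)%MM -> w = u).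

(* exponent vector of x_j (u / x_i)  (used only when u i > 0) *)
Definition exch (u : 'X_{1..n}) (i j : 'I_n) : 'X_{1..n} :=
  (u - U_(i) + U_(j))%MM.

(* I_<j>: the ideal generated by the monomials of degree j in I
   (described by its monomial support). *)
Definition degcomp (I : {mpoly K[n]} -> Prop) (d : nat) : {mpoly K[n]} -> Prop :=
  fun p => forall m, m \in msupp p ->
    exists w : 'X_{1..n}, [/\ I 'X_[w], mdeg w = d & (w <= m)%MM].

Definition polymatroidal (I : {mpoly K[n]} -> Prop) : Prop :=
  (exists d, forall u, mingen I u -> mdeg u = d) /\
  (forall u v (i : 'I_n), mingen I u -> mingen I v -> (v i < u i)%N ->
     exists j : 'I_n, (u j < v j)%N /\ I 'X_[exch u i j]).

Definition componentwise_polymatroidal (I : {mpoly K[n]} -> Prop) : Prop :=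
  forall d : nat, (exists p, degcomp I d p /\ p != 0) -> polymatroidal (degcomp I d).

Definition nonpure_exchange (I : {mpoly K[n]} -> Prop) : Prop :=
  forall u v (i : 'I_n), mingen I u -> mingen I v -> (mdeg u <= mdeg v)%N ->
    (u i < v i)%N ->
    exists j : 'I_n, (v j < u j)%N /\ I 'X_[exch v i j].

Definition nonpure_dual_exchange (I : {mpoly K[n]} -> Prop) : Prop :=
  forall u v (i : 'I_n), mingen I u -> mingen I v -> (mdeg u <= mdeg v)%N ->
    (v i < u i)%N ->
    exists j : 'I_n, (u j < v j)%N /\ I 'X_[exch v j i].

End MonomialIdeals.

(* Main.v *)
Require Import Defs.
From mathcomp Require Import all_boot all_algebra.
From mathcomp Require Import mpoly.
From mathcomp Require Import zify.
From Stdlib Require Import Classical.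
Set Implicit Arguments.
Set Implicit Arguments.

Section Abs.
Variable S : nat -> nat -> Prop.

Definition Gn a b := S a b /\ forall x y, S x y -> x <= a -> y <= b -> x = a /\ y = b.

Definition Upc := forall a b a' b', S a b -> a <= a' -> b <= b' -> S a' b'.

Lemma gen_exists : forall a b, S a b -> exists x y, Gn x y /\ x <= a /\ y <= b.
Proof.
suff H : forall k a b, a + b <= k -> S a b -> exists x y, Gn x y /\ x <= a /\ y <= b.
  by move=> a b; apply: (H (a+b)).
elim=> [|k IH] a b Hk Sab.
  exists a, b; split; last by [].
  split=> // x y _ Hx Hy; lia.
case: (classic (Gn a b)) => [G|nG].
  by exists a, b.
have: ~ (forall x y, S x y -> x <= a -> y <= b -> x = a /\ y = b) by move=> H; apply: nG.
move=> /not_all_ex_not [x] /not_all_ex_not [y] H.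
have [Sxy [Hx [Hy Hne]]] : S x y /\ x <= a /\ y <= b /\ ~ (x = a /\ y = b).
  apply: NNPP => H2; apply: H => Sxy Hx Hy; apply: NNPP => Hne; apply: H2; tauto.
have Hd : x + y <= k.
  have: ~ (x = a /\ y = b) := Hne. lia.
have [x' [y' [G' [H1 H2]]]] := IH x y Hd Sxy.
exists x', y'; split=> //; lia.
Qed.

Definition NE := forall u0 u1 v0 v1, Gn u0 u1 -> Gn v0 v1 -> u0 + u1 <= v0 + v1 ->
  (u0 < v0 -> v1 < u1 /\ S (v0 - 1) (v1 + 1)) /\
  (u1 < v1 -> v0 < u0 /\ S (v0 + 1) (v1 - 1)).

Definition ND := forall u0 u1 v0 v1, Gn u0 u1 -> Gn v0 v1 -> u0 + u1 <= v0 + v1 ->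
  (v0 < u0 -> u1 < v1 /\ S (v0 + 1) (v1 - 1)) /\
  (v1 < u1 -> u0 < v0 /\ S (v0 - 1) (v1 + 1)).

Definition CP := forall a b c e, S a b -> S c e -> a + b = c + e ->
  (c < a -> b < e /\ S (a - 1) (b + 1)) /\ (e < b -> a < c /\ S (a + 1) (b - 1)).

Lemma incomp u0 u1 v0 v1 : Gn u0 u1 -> Gn v0 v1 -> u0 <= v0 -> u1 <= v1 -> u0 = v0 /\ u1 = v1.
Proof. move=> [Su _] [_ Mv] h1 h2; exact: Mv. Qed.

Lemma ND_NE : ND <-> NE.
Proof.
split=> H u0 u1 v0 v1 Gu Gv Hd; have [H1 H2] := H u0 u1 v0 v1 Gu Gv Hd.
- split=> Hlt.
  + have Hv : v1 < u1.
      case: (leqP u1 v1) => // h; have := incomp Gu Gv (ltnW Hlt) h; lia.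
    by have [_ ?] := H2 Hv.
  + have Hv : v0 < u0.
      case: (leqP u0 v0) => // h; have := incomp Gu Gv h (ltnW Hlt); lia.
    by have [_ ?] := H1 Hv.
- split=> Hlt.
  + have Hv : u1 < v1.
      case: (leqP v1 u1) => // h.
      have := incomp Gv Gu (ltnW Hlt) h. lia.
    by have [_ ?] := H2 Hv.
  + have Hv : u0 < v0.
      case: (leqP v0 u0) => // h; have := incomp Gv Gu h (ltnW Hlt); lia.
    by have [_ ?] := H1 Hv.
Qed.

Lemma step (up : Upc) (ne : NE) : forall c e a b, S a b -> S c e -> a + b = c + e -> a < c ->
  S (a + 1) (b - 1).
Proof.
elim=> [|c IH] e a b Sab Sce Hd Hac; first lia.
have [g0 [g1 [Gg [hg0 hg1]]]] := gen_exists Sab.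
have [h0 [h1 [Gh [hh0 hh1]]]] := gen_exists Sce.
case: (leqP h0 (a + 1)) => Hh0.
  by apply: (up h0 h1) => //; [case: Gh | lia].
case: (leqP g1 (b - 1)) => Hg1.
  by apply: (up g0 g1) => //; [case: Gg | lia].
case: (leqP (g0 + g1) (h0 + h1)) => Hdeg.
- have [_ S''] := (ne _ _ _ _ Gg Gh Hdeg).1 ltac:(lia).
  have Sc : S c (e + 1) by apply: (up _ _ _ _ S''); lia.
  case: (ltnP a c) => Hac'.
    by apply: (IH (e + 1)) => //; lia.
  have -> : a = c by lia.
  have -> : b - 1 = e by lia.
  by rewrite addn1.
- have [_ S''] := (ne _ _ _ _ Gh Gg (ltnW Hdeg)).2 ltac:(lia).
  by apply: (up _ _ _ _ S''); lia.
Qed.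

End Abs.

Lemma swapG S a b : Gn (fun x y => S y x) a b <-> Gn S b a.
Proof.
split=> [[Sab M]|[Sab M]]; split=> // x y Sxy h1 h2.
- by have [? ?] := M y x Sxy h2 h1.
- by have [? ?] := M y x Sxy h2 h1.
Qed.

Lemma CP_of_NE S : Upc S -> NE S -> CP S.
Proof.
move=> up ne a b c e Sab Sce Hd; split=> Hlt.
- split; first lia.
  have up' : Upc (fun x y => S y x) by move=> ? ? ? ? H h1 h2; exact: up H h2 h1.
  have ne' : NE (fun x y => S y x).
    move=> u0 u1 v0 v1 /swapG Gu /swapG Gv Hdeg.
    have [A B] := ne _ _ _ _ Gu Gv ltac:(lia).
    split=> h; [have [? ?] := B h | have [? ?] := A h]; by [].
  apply: (step up' ne' e c b a) => //; lia.
- split; first lia.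
  apply: (step up ne c e a b) => //; lia.
Qed.

Lemma NE_of_CP S : Upc S -> CP S -> NE S.
Proof.
move=> up cp u0 u1 v0 v1 Gu Gv Hd; split=> Hlt.
- have Hv : v1 < u1.
    case: (leqP u1 v1) => // h; have := incomp Gu Gv (ltnW Hlt) h; lia.
  split=> //.
  have Su : S u0 (u1 + (v0 + v1 - u0 - u1)) by apply: (up u0 u1); [case: Gu|lia|lia].
  have [A _] := cp v0 v1 _ _ (proj1 Gv) Su ltac:(lia).
  by case: (A Hlt).
- have Hv : v0 < u0.
    case: (leqP u0 v0) => // h; have := incomp Gu Gv h (ltnW Hlt); lia.
  split=> //.
  have Su : S (u0 + (v0 + v1 - u0 - u1)) u1 by apply: (up u0 u1); [case: Gu|lia|lia].
  have [_ B] := cp v0 v1 _ _ (proj1 Gv) Su ltac:(lia).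
  by case: (B Hlt).
Qed.

Import GRing.Theory.

Definition o1 : 'I_2 := Ordinal (isT : 1 < 2).
Definition mk (a b : nat) : 'X_{1..2} := [multinom (if i == ord0 then a else b) | i < 2].

Lemma mk0 a b : mk a b ord0 = a. Proof. by rewrite mnmE. Qed.
Lemma mk1 a b : mk a b o1 = b. Proof. by rewrite mnmE. Qed.
Lemma ord2 (i : 'I_2) : i = ord0 \/ i = o1.
Proof. case: i => [[|[|k]] Hk]; [left|right|]; try (apply: val_inj; reflexivity). by []. Qed.
Lemma mkE (m : 'X_{1..2}) : mk (m ord0) (m o1) = m.
Proof. by apply/mnmP => i; case: (ord2 i) => ->; rewrite ?mk0 ?mk1. Qed.
Lemma mdeg2 (m : 'X_{1..2}) : mdeg m = (m ord0 + m o1)%N.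
Proof.
rewrite mdegE big_ord_recr big_ord1 /=; congr (m _ + m _)%N; exact: ord_inj.
Qed.
Lemma lep2 (w m : 'X_{1..2}) : (w <= m)%MM <-> (w ord0 <= m ord0 /\ w o1 <= m o1)%N.
Proof.
split=> [/mnm_lepP H|[H0 H1]]; first by split; apply: H.
by apply/mnm_lepP => i; case: (ord2 i) => ->.
Qed.
Lemma mnm2_eq (w m : 'X_{1..2}) : w ord0 = m ord0 -> w o1 = m o1 -> w = m.
Proof. by move=> h0 h1; rewrite -(mkE w) -(mkE m) h0 h1. Qed.
Lemma exch01 (m : 'X_{1..2}) : exch m ord0 o1 = mk (m ord0 - 1) (m o1 + 1).
Proof. by apply: mnm2_eq; rewrite ?mk0 ?mk1 /exch mnmDE mnmBE !mnm1E /= ?addn0 ?subn0. Qed.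
Lemma exch10 (m : 'X_{1..2}) : exch m o1 ord0 = mk (m ord0 + 1) (m o1 - 1).
Proof. by apply: mnm2_eq; rewrite ?mk0 ?mk1 /exch mnmDE mnmBE !mnm1E /= ?addn0 ?subn0. Qed.

Section Trans.
Variables (K : fieldType) (I : {mpoly K[2]} -> Prop).
Hypothesis Iid : is_ideal I.

Definition Sd a b := I 'X_[mk a b].

Lemma upI (w m : 'X_{1..2}) : I 'X_[w] -> (w <= m)%MM -> I 'X_[m].
Proof.
case: Iid => _ _ Imul Iw Hle.
by rewrite -(submK Hle) mpolyXD; apply: Imul.
Qed.

Lemma upS : Upc Sd.
Proof.
move=> a b a' b' H h1 h2; apply: (upI (mk a b)) => //.
by apply/lep2; rewrite !mk0 !mk1.
Qed.

Lemma mingenG (u : 'X_{1..2}) : mingen I u <-> Gn Sd (u ord0) (u o1).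
Proof.
split=> [[Iu M]|[Su M]].
- split; first by rewrite /Sd mkE.
  move=> x y Sxy hx hy.
  have E : mk x y = u by apply: M => //; apply/lep2; rewrite mk0 mk1.
  by rewrite -E mk0 mk1.
- split; first by rewrite -(mkE u).
  move=> w Iw /lep2 [h0 h1].
  have [e0 e1] := M (w ord0) (w o1) ltac:(by rewrite /Sd mkE) h0 h1.
  exact: mnm2_eq.
Qed.

Lemma mingenGmk a b : mingen I (mk a b) <-> Gn Sd a b.
Proof. by rewrite mingenG mk0 mk1. Qed.

Lemma D1 d (m : 'X_{1..2}) :
  degcomp I d 'X_[m] <-> exists w, [/\ I 'X_[w], mdeg w = d & (w <= m)%MM].
Proof.
split=> [H|[w Hw] m']; first by apply: H; rewrite msuppX mem_seq1.
by rewrite msuppX mem_seq1 => /eqP ->; exists w.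
Qed.

Lemma D2 d (u : 'X_{1..2}) : mingen (degcomp I d) u <-> I 'X_[u] /\ mdeg u = d.
Proof.
split=> [[/D1 [w [Iw dw wu]] M]|[Iu du]].
- have E : w = u by apply: M => //; apply/D1; exists w; split=> //; exact: lepm_refl.
  by rewrite -E.
- split; first by apply/D1; exists u; split=> //; exact: lepm_refl.
  move=> w /D1 [w' [Iw' dw' w'w]] wu.
  move: (lepm_trans w'w wu) => /lep2 [a0 a1].
  move: w'w wu => /lep2 [b0 b1] /lep2 [c0 c1].
  move: dw'; rewrite -du !mdeg2 => dd.
  apply: mnm2_eq; lia.
Qed.

Lemma NE_iff : nonpure_exchange I <-> NE Sd.
Proof.
split=> [H u0 u1 v0 v1 Gu Gv Hd|H u v i mu mv Hd Hlt].
- have mu := proj2 (mingenGmk u0 u1) Gu.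
  have mv := proj2 (mingenGmk v0 v1) Gv.
  have Hd' : (mdeg (mk u0 u1) <= mdeg (mk v0 v1))%N by rewrite !mdeg2 !mk0 !mk1.
  split=> Hlt.
  + have [j [hj Ij]] := H _ _ ord0 mu mv Hd' ltac:(by rewrite !mk0).
    case: (ord2 j) hj Ij => -> hj Ij; first by move: hj; rewrite !mk0; lia.
    by move: hj Ij; rewrite exch01 !mk0 !mk1.
  + have [j [hj Ij]] := H _ _ o1 mu mv Hd' ltac:(by rewrite !mk1).
    case: (ord2 j) hj Ij => -> hj Ij; last by move: hj; rewrite !mk1; lia.
    by move: hj Ij; rewrite exch10 !mk0 !mk1.
- move: mu mv => /mingenG Gu /mingenG Gv.
  have [A B] := H _ _ _ _ Gu Gv ltac:(by rewrite -!mdeg2).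
  case: (ord2 i) Hlt => -> Hlt.
  + have [h S] := A Hlt; exists o1; split=> //; by rewrite exch01.
  + have [h S] := B Hlt; exists ord0; split=> //; by rewrite exch10.
Qed.

Lemma ND_iff : nonpure_dual_exchange I <-> ND Sd.
Proof.
split=> [H u0 u1 v0 v1 Gu Gv Hd|H u v i mu mv Hd Hlt].
- have mu := proj2 (mingenGmk u0 u1) Gu.
  have mv := proj2 (mingenGmk v0 v1) Gv.
  have Hd' : (mdeg (mk u0 u1) <= mdeg (mk v0 v1))%N by rewrite !mdeg2 !mk0 !mk1.
  split=> Hlt.
  + have [j [hj Ij]] := H _ _ ord0 mu mv Hd' ltac:(by rewrite !mk0).
    case: (ord2 j) hj Ij => -> hj Ij; first by move: hj; rewrite !mk0; lia.
    by move: hj Ij; rewrite exch10 !mk0 !mk1.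
  + have [j [hj Ij]] := H _ _ o1 mu mv Hd' ltac:(by rewrite !mk1).
    case: (ord2 j) hj Ij => -> hj Ij; last by move: hj; rewrite !mk1; lia.
    by move: hj Ij; rewrite exch01 !mk0 !mk1.
- move: mu mv => /mingenG Gu /mingenG Gv.
  have [A B] := H _ _ _ _ Gu Gv ltac:(by rewrite -!mdeg2).
  case: (ord2 i) Hlt => -> Hlt.
  + have [h S] := A Hlt; exists o1; split=> //; by rewrite exch10.
  + have [h S] := B Hlt; exists ord0; split=> //; by rewrite exch01.
Qed.

Lemma X_neq0 (m : 'X_{1..2}) : (('X_[m] : {mpoly K[2]}) != 0)%R.
Proof.
apply/eqP => H; have := @mcoeffX 2 K m m; rewrite H mcoeff0 eqxx => /eqP.
by rewrite eq_sym oner_eq0.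
Qed.

Lemma CP_iff : componentwise_polymatroidal I <-> CP Sd.
Proof.
split=> [H a b c e Sab Sce Hd|H d _].
- have [_ Ex] : polymatroidal (degcomp I (a + b)).
    apply: H; exists 'X_[mk a b]; split; last exact: X_neq0.
    apply/D1; exists (mk a b); split=> //; last exact: lepm_refl.
    by rewrite mdeg2 mk0 mk1.
  have mu : mingen (degcomp I (a + b)) (mk a b).
    by apply/D2; split=> //; rewrite mdeg2 mk0 mk1.
  have mv : mingen (degcomp I (a + b)) (mk c e).
    by apply/D2; split=> //; rewrite mdeg2 mk0 mk1.
  split=> Hlt.
  + have [j [hj Dj]] := Ex _ _ ord0 mu mv ltac:(by rewrite !mk0).
    case: (ord2 j) hj Dj => -> hj Dj; first by move: hj; rewrite !mk0; lia.
    move: hj; rewrite !mk1 => hj; split=> //.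
    move/D1: Dj => [w [Iw _ wle]]; move: (upI _ _ Iw wle).
    by rewrite exch01 !mk0 !mk1.
  + have [j [hj Dj]] := Ex _ _ o1 mu mv ltac:(by rewrite !mk1).
    case: (ord2 j) hj Dj => -> hj Dj; last by move: hj; rewrite !mk1; lia.
    move: hj; rewrite !mk0 => hj; split=> //.
    move/D1: Dj => [w [Iw _ wle]]; move: (upI _ _ Iw wle).
    by rewrite exch10 !mk0 !mk1.
- split; first by exists d => u /D2 [_ ->].
  move=> u v i /D2 [Iu du] /D2 [Iv dv] Hlt.
  have Su : Sd (u ord0) (u o1) by rewrite /Sd mkE.
  have Sv : Sd (v ord0) (v o1) by rewrite /Sd mkE.
  have [A B] := H _ _ _ _ Su Sv ltac:(by rewrite -!mdeg2 du dv).
  move: du; rewrite mdeg2 => du.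
  case: (ord2 i) Hlt => -> Hlt.
  + have [h S] := A Hlt; exists o1; split=> //; apply/D1; exists (exch u ord0 o1).
    split; [by rewrite exch01 | rewrite exch01 mdeg2 mk0 mk1; lia | exact: lepm_refl].
  + have [h S] := B Hlt; exists ord0; split=> //; apply/D1; exists (exch u o1 ord0).
    split; [by rewrite exch10 | rewrite exch10 mdeg2 mk0 mk1; lia | exact: lepm_refl].
Qed.

End Trans.

Theorem proposition2p5 (K : fieldType) (I : {mpoly K[2]} -> Prop) :
  is_monomial_ideal I ->
  (nonpure_dual_exchange I <-> nonpure_exchange I) /\
  (nonpure_exchange I <-> componentwise_polymatroidal I).
Proof.
move=> [Iid _]; split.
- rewrite (@ND_iff K I) (@NE_iff K I); exact: ND_NE.
- rewrite (@NE_iff K I) (@CP_iff K I Iid); split.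
  + exact: CP_of_NE (@upS K I Iid).
  + exact: NE_of_CP (@upS K I Iid).
Qed.
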